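(* For every positive integer $x$, the $T$-orbit $x,T(x),T^2(x),\dots$ contains an integer congruent to $2\pmod 9$.
   Context: $T(z)=z/2$ for $z$ even and $T(z)=(3z+1)/2$ for $z$ odd. *)

(* Defs.v *)
From mathcomp Require Import all_boot.
Set Implicit Arguments. Unset Strict Implicit. Unset Printing Implicit Defensive.

(* Collatz map T on naturals (orbits of positive integers stay positive):
   T z = z/2 if z even, (3z+1)/2 if z odd. *)
Definition T (z : nat) : nat := if odd z then (3 * z + 1)./2 else z./2.

(* Main.v *)
Require Import Defs.
From mathcomp Require Import all_boot.
From mathcomp Require Import zify.

Definition G z := exists k : nat, iter k T z = 2 %[mod 9].

Lemma Tdef z : T z = if z %% 2 == 1 then (3 * z + 1) %/ 2 else z %/ 2.
Proof. by rewrite /T modn2 !divn2; case: (odd z). Qed.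

Lemma Gstep z : G (T z) -> G z.
Proof. by move=> [k Hk]; exists k.+1; rewrite iterSr. Qed.

Lemma G2 z : z %% 9 = 2 -> G z.
Proof. by move=> H; exists 0; rewrite /= H. Qed.

Lemma L4 z : z %% 9 = 4 -> G z.
Proof. move=> H; apply: Gstep; apply: G2; rewrite Tdef; case: ifP => /eqP ?; lia. Qed.

Lemma L8n n : forall z, z %% 9 = 8 -> ~~ (2 ^ n %| z.+1) -> G z.
Proof.
elim: n => [|n IH] z H Hd; first by rewrite expn0 dvd1n in Hd.
apply: Gstep; rewrite Tdef; case: ifP => /eqP Hz.
- apply: IH; first lia.
  apply/negP => Hd2; move/negP: Hd; apply.
  rewrite expnS.
  have E : ((3 * z + 1) %/ 2).+1 * 2 = 3 * z.+1 by lia.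
  have : 2 ^ n * 2 %| 3 * z.+1 by rewrite -E dvdn_pmul2r.
  rewrite Gauss_dvdr //.
  by rewrite mulnC.
  by rewrite coprimeMl; apply/andP; split; [apply: coprimeXl|].
- apply: L4; lia.
Qed.

Lemma L8 z : z %% 9 = 8 -> G z.
Proof.
move=> H; apply: (L8n z.+1) => //.
apply/negP => /dvdn_leq; rewrite ltn0Sn => /(_ isT).
by rewrite leqNgt ltn_expl.
Qed.

Lemma L7 z : z %% 9 = 7 -> G z.
Proof.
move=> H; apply: Gstep; rewrite Tdef; case: ifP => /eqP ?.
- apply: G2; lia.
- apply: L8; lia.
Qed.

Lemma L5 z : z %% 9 = 5 -> G z.
Proof.
move=> H; apply: Gstep; rewrite Tdef; case: ifP => /eqP ?.
- apply: L8; lia.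
- apply: L7; lia.
Qed.

Lemma L1 z : z %% 9 = 1 -> G z.
Proof.
move=> H; apply: Gstep; rewrite Tdef; case: ifP => /eqP ?.
- apply: G2; lia.
- apply: L5; lia.
Qed.

Lemma L0n n : forall z, z < n -> 0 < z -> z %% 3 = 0 -> G z.
Proof.
elim: n => [|n IH] z Hn Hp H; first by [].
apply: Gstep; rewrite Tdef; case: ifP => /eqP ?.
- apply: L5; lia.
- apply: IH; lia.
Qed.

Theorem mainTheorem12 (x : nat) (hx : 0 < x) :
  exists k : nat, iter k T x = 2 %[mod 9].
Proof.
have Hlt : x %% 9 < 9 by rewrite ltn_mod.
case Hm: (x %% 9) Hlt => [|[|[|[|[|[|[|[|[|m]]]]]]]]] Hlt.
- apply: (L0n x.+1) => //; lia.
- exact: L1.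
- exact: G2.
- apply: (L0n x.+1) => //; lia.
- exact: L4.
- exact: L5.
- apply: (L0n x.+1) => //; lia.
- exact: L7.
- exact: L8.
- by [].
Qed.
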